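(* Let $p$ be an odd prime, $a,m\in\mathbb Z_p$ with $m\not\equiv0\pmod p$ and $a\not\equiv0,-1\pmod p$, and put $A_k=\binom ak\binom{-1-a}k\binom{2k}k$. Then $$\sum_{k=0}^{p-1}\frac{A_k}{m^k(2k-1)}\equiv\Big(\frac8m-2\Big)\sum_{k=0}^{p-1}\frac{kA_k}{m^k}-\sum_{k=0}^{p-1}\frac{A_k}{m^k}-\frac{8a(a+1)}m\sum_{k=0}^{p-2}\frac{A_k}{m^k(k+1)}\pmod{p^3}.$$
   Context: $\mathbb Z_p$ denotes the set of rational numbers whose denominator is not divisible by $p$; for $u,v\in\mathbb Z_p$, $u\equiv v\pmod{p^r}$ means $(u-v)/p^r\in\mathbb Z_p$. For $a$ rational, $\binom a0=1$ and $\binom ak=\frac{a(a-1)\cdots(a-k+1)}{k!}$ for $k\ge1$. *)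

(* Defs.v *)
From mathcomp Require Import all_boot all_order all_algebra.
Set Implicit Arguments. Unset Strict Implicit. Unset Printing Implicit Defensive.
Import Order.TTheory GRing.Theory Num.Theory.
Local Open Scope ring_scope.

(* x lies in Z_p : the (reduced) denominator of x is not divisible by p. *)
Definition pint (p : nat) (x : rat) : bool := ~~ (p %| `|denq x|)%N.

Definition congr_mod (p r : nat) (u v : rat) : bool :=
  pint p ((u - v) / (p ^ r)%:R).

Definition binq (a : rat) (k : nat) : rat :=
  (\prod_(i < k) (a - i%:R)) / (k`!)%:R.

Definition Aseq (a : rat) (k : nat) : rat :=
  binq a k * binq (-1 - a) k * ('C(k.*2, k))%:R.

(* Main.v *)
Require Import Defs.
From mathcomp Require Import all_boot all_order all_algebra.
From mathcomp Require Import ring lra zify.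
Set Implicit Arguments. Unset Strict Implicit. Unset Printing Implicit Defensive.
Import Order.TTheory GRing.Theory Num.Theory.
Local Open Scope ring_scope.

Section P.
Variable p : nat.
Hypothesis pp : prime p.

Lemma pint_frac (n d : int) : ~~ (p %| `|d|)%N -> pint p (n%:~R / d%:~R).
Proof.
move=> hd; rewrite /pint -(fracqE (n, d)) den_fracq /=.
have d0 : d != 0 by apply: contraNneq hd => ->; rewrite dvdn0.
rewrite d0 /=; apply: contra hd => h; apply: dvdn_trans h _.
by apply: dvdn_div; apply: dvdn_gcdr.
Qed.
End P.

Section P.
Variable p : nat.
Hypothesis pp : prime p.

Lemma pintE x : pint p x ->
  exists n d : int, ~~ (p %| `|d|)%N /\ x = n%:~R / d%:~R.
Proof. by move=> h; exists (numq x), (denq x); rewrite divq_num_den. Qed.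

Lemma ndvdM (d1 d2 : int) : ~~ (p %| `|d1|)%N -> ~~ (p %| `|d2|)%N ->
  ~~ (p %| `|(d1 * d2)%R|)%N.
Proof. by move=> h1 h2; rewrite abszM Euclid_dvdM // negb_or h1. Qed.

Lemma ndvd0 (d : int) : ~~ (p %| `|d|)%N -> d != 0.
Proof. by move=> hd; apply: contraNneq hd => ->; rewrite dvdn0. Qed.

Lemma pintM x y : pint p x -> pint p y -> pint p (x * y).
Proof.
move=> /pintE [n1 [d1 [h1 ->]]] /pintE [n2 [d2 [h2 ->]]].
have := pint_frac (n1 * n2) (ndvdM h1 h2); rewrite !rmorphM /=.
by rewrite mulrACA invfM.
Qed.

Lemma pintD x y : pint p x -> pint p y -> pint p (x + y).
Proof.
move=> /pintE [n1 [d1 [h1 ->]]] /pintE [n2 [d2 [h2 ->]]].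
have := pint_frac (n1 * d2 + n2 * d1) (ndvdM h1 h2).
have e1 : (d1%:~R : rat) != 0 by rewrite intr_eq0 ndvd0.
have e2 : (d2%:~R : rat) != 0 by rewrite intr_eq0 ndvd0.
rewrite !rmorphD !rmorphM /=. congr pint. field. by rewrite e1 e2.
Qed.

Lemma pint_int (n : int) : pint p n%:~R.
Proof. have := @pint_frac p n 1; rewrite divr1; apply; rewrite dvdn1; apply/eqP => e; by move: pp; rewrite e. Qed.

Lemma pint_nat (n : nat) : pint p n%:R.
Proof. exact: (pint_int n). Qed.

Lemma pint1 : pint p 1. Proof. exact: (pint_int 1). Qed.
Lemma pint0 : pint p 0. Proof. exact: (pint_int 0). Qed.

Lemma pintN x : pint p x -> pint p (- x).
Proof. by move=> h; rewrite -mulN1r; apply: pintM => //; apply: (pint_int (-1)). Qed.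

Lemma pintB x y : pint p x -> pint p y -> pint p (x - y).
Proof. by move=> hx hy; apply: pintD => //; apply: pintN. Qed.

Lemma pintX x k : pint p x -> pint p (x ^+ k).
Proof. by move=> h; elim: k => [|k IH]; [rewrite expr0; exact: pint1|rewrite exprS; apply: pintM]. Qed.

Lemma pint_prod I (r : seq I) (P : pred I) F :
  (forall i, P i -> pint p (F i)) -> pint p (\prod_(i <- r | P i) F i).
Proof. by move=> h; apply: (big_ind (pint p)) => //; [exact: pint1|apply: pintM]. Qed.

Lemma pint_sum I (r : seq I) (P : pred I) F :
  (forall i, P i -> pint p (F i)) -> pint p (\sum_(i <- r | P i) F i).
Proof. by move=> h; apply: (big_ind (pint p)) => //; [exact: pint0|apply: pintD]. Qed.

Lemma pintV x : pint p x -> ~~ pint p (x / p%:R) -> pint p x^-1.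
Proof.
move=> /pintE [n [d [h ->]]] hx.
have hn : ~~ (p %| `|n|)%N.
  apply: contra hx => /(@dvdzP p n) [q eq]; rewrite eq.
  have := pint_frac q h; congr pint; rewrite rmorphM /=.
  have e1 : (d%:~R : rat) != 0 by rewrite intr_eq0 ndvd0.
  have e2 : (p%:R : rat) != 0 by rewrite pnatr_eq0 -lt0n prime_gt0.
  rewrite -pmulrn. field. by rewrite e1 e2.

by have := pint_frac d hn; rewrite invf_div.
Qed.

Lemma pint_invnat (k : nat) : ~~ (p %| k)%N -> pint p (k%:R)^-1.
Proof. by move=> h; have := pint_frac 1 (d := k) h; rewrite div1r. Qed.

End P.

Section P.
Variable p : nat.
Hypothesis pp : prime p.

Lemma pint_res a : pint p a -> exists i, (i < p)%N /\ pint p ((a - i%:R) / p%:R).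
Proof.
move=> /(pintE) [n [d [h ->]]].
have cop : coprime `|d| p by rewrite coprime_sym prime_coprime.
have [u [v e]] := Bezoutz d p.
have p0 : (p%:Z) != 0 by rewrite eqz_nat -lt0n prime_gt0.
set i := ((n * u) %% p)%Z.
have i0 : 0 <= i by apply: modz_ge0.
have ip : i < p by apply: ltz_pmod; rewrite ltz_nat prime_gt0.
exists `|i|%N; split; first by rewrite -ltz_nat gez0_abs.
have eqi := divz_eq (n * u) p. set q := ((n * u) %/ p)%Z in eqi.
have g1 : gcdz d p = 1 by rewrite /gcdz; move: cop => /eqP ->.
rewrite g1 in e.
have := pint_frac (n * v + q * d) h.
have e1 : (d%:~R : rat) != 0 by rewrite intr_eq0 (ndvd0 h).
have e2 : (p%:R : rat) != 0 by rewrite pnatr_eq0 -lt0n prime_gt0.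
have ei : ((`|i|%N)%:R : rat) = i%:~R by rewrite pmulrn gez0_abs.
rewrite ei; congr pint.
have : (n * u)%:~R = q%:~R * p%:R + i%:~R :> rat by rewrite pmulrn -rmorphM -rmorphD -eqi.
have : u%:~R * d%:~R + v%:~R * p%:R = 1 :> rat by rewrite pmulrn -!rmorphM -rmorphD e.
rewrite rmorphM /=.
move=> E1 E2.
rewrite rmorphD !rmorphM /=.
have -> : (i%:~R : rat) = n%:~R * u%:~R - q%:~R * p%:R by rewrite E2; ring.
have E3 : (v%:~R : rat) = (1 - u%:~R * d%:~R) / p%:R by apply: (mulIf e2); rewrite divfK //; apply: (addrI (u%:~R * d%:~R)); rewrite E1; ring.
rewrite E3. field. by rewrite e1 e2.
Qed.
End P.

Lemma fact_neq0 n : (n`!%:R : rat) != 0.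
Proof. by rewrite pnatr_eq0 -lt0n fact_gt0. Qed.

Lemma natS_neq0 n : (n.+1%:R : rat) != 0.
Proof. by rewrite pnatr_eq0. Qed.

Lemma binqS a n : binq a n.+1 = binq a n * (a - n%:R) / n.+1%:R.
Proof.
rewrite /binq big_ord_recr /= factS natrM.
have := fact_neq0 n; have := natS_neq0 n => h1 h2.
field. by rewrite addrC natr1 h1 h2.
Qed.

Lemma CSnat n : ('C(n.+1.*2, n.+1) * n.+1 = 2 * (2 * n + 1) * 'C(n.*2, n))%N.
Proof.
have e1 : 'C(n.+1.*2, n.+1) = 'C(n.*2.+1, n.+1) + 'C(n.*2.+1, n) by rewrite doubleS binS.
have e2 : 'C(n.*2.+1, n) = 'C(n.*2.+1, n.+1).
  have e : (n.*2.+1 - n.+1 = n)%N by rewrite -addnn; lia.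
  transitivity 'C(n.*2.+1, n.*2.+1 - n.+1); first by rewrite e.
  by rewrite bin_sub // -addnn; lia.
have e3 := mul_bin_diag n.*2.+1 n. rewrite /= in e3.
rewrite e1 e2. lia.
Qed.

Lemma CS n : (('C(n.+1.*2, n.+1))%:R : rat) = ('C(n.*2, n))%:R * (2 * (2 * n%:R + 1)) / n.+1%:R.
Proof.
have := congr1 (fun x => x%:R : rat) (CSnat n); rewrite /= !natrM natrD natrM => H.
apply: (mulIf (natS_neq0 n)); rewrite divfK ?natS_neq0 // H; ring.
Qed.

Lemma AseqS a n : Aseq a n.+1 =
  Aseq a n * (- 2 * (2 * n%:R + 1) * (a - n%:R) * (a + n%:R + 1) / (n.+1%:R ^+ 3)).
Proof.
rewrite /Aseq !binqS CS.
have := natS_neq0 n => h.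
field. by rewrite addrC natr1.
Qed.

Lemma ident (a m : rat) n : m != 0 ->
  (\sum_(0 <= k < n.+1) Aseq a k / (m ^+ k * (2 * k%:R - 1)))
  - ((8 / m - 2) * (\sum_(0 <= k < n.+1) k%:R * Aseq a k / m ^+ k)
     - (\sum_(0 <= k < n.+1) Aseq a k / m ^+ k)
     - 8 * a * (a + 1) / m * (\sum_(0 <= k < n) Aseq a k / (m ^+ k * (k%:R + 1))))
  = - (8 * n%:R / m) * (Aseq a n / m ^+ n).
Proof.
move=> m0; elim: n => [|n IH].
  rewrite !big_nat1 big_geq // /Aseq /binq !big_ord0 /=.
  rewrite bin0 expr0 fact0. by field.
rewrite big_nat_recr //= [X in _ - (_ * X - _ - _)]big_nat_recr //=.
rewrite [X in _ - (_ - X - _)]big_nat_recr //= [X in _ - (_ - _ - _ * X)]big_nat_recr //=.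
move: IH.
set L := \sum_(0 <= k < n.+1) _.
set S1 := \sum_(0 <= k < n.+1) _.
set S0 := \sum_(0 <= k < n.+1) _.
set S2 := \sum_(0 <= k < n) _.
move=> IH.
have eL : L = - (8 * n%:R / m) * (Aseq a n / m ^+ n) + ((8 / m - 2) * S1 - S0 - 8 * a * (a + 1) / m * S2).
  by rewrite -IH; ring.
rewrite eL AseqS [m ^+ n.+1]exprS.
have h1 := natS_neq0 n.
have hn : (0:rat) <= n%:R := ler0n _ n.
have h2 : (2 * n%:R + 1 : rat) != 0 by apply: lt0r_neq0; lra.
rewrite -[n.+1%:R]natr1.
field.
rewrite expf_neq0 // m0 natr1 h1 /=.
by apply: lt0r_neq0; lra.
Qed.

Section P.
Variable p : nat.
Hypothesis pp : prime p.

Lemma ndvd_fact n : (n < p)%N -> ~~ (p %| n`!)%N.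
Proof.
elim: n => [|n IH] h; first by rewrite dvdn1; apply/eqP => e; move: pp; rewrite e.
by rewrite factS Euclid_dvdM // negb_or IH 1?ltnW // gtnNdvd.
Qed.

Lemma p_neq0 : (p%:R : rat) != 0.
Proof. by rewrite pnatr_eq0 -lt0n prime_gt0. Qed.

Lemma binq_div (b : rat) n i : (i < n)%N -> (n < p)%N -> pint p b ->
  pint p ((b - i%:R) / p%:R) -> pint p (binq b n / p%:R).
Proof.
move=> hi hn hb ht.
rewrite /binq (bigD1 (Ordinal hi)) //=.
have -> : (b - i%:R) * (\prod_(j < n | j != Ordinal hi) (b - (val j)%:R)) / n`!%:R / p%:R
  = ((b - i%:R) / p%:R) * (\prod_(j < n | j != Ordinal hi) (b - (val j)%:R)) * (n`!%:R)^-1.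
  by have := p_neq0; have := fact_neq0 n => h1 h2; field; rewrite h1 h2.
apply: (pintM pp); [apply: (pintM pp) => //|exact: pint_invnat (ndvd_fact hn)].
by apply: (pint_prod pp) => j _; apply: (pintB pp) => //; apply: (pint_nat pp).
Qed.

Lemma Cdiv n : (p <= n.*2)%N -> (n < p)%N -> pint p (('C(n.*2, n))%:R / p%:R).
Proof.
move=> h1 h2.
have hd : (p %| 'C(n.*2, n))%N.
  have e := bin_fact (leq_addl n n : (n <= n + n)%N).
  rewrite addnK in e. rewrite -addnn.
  have : (p %| (n + n)`!)%N by apply: dvdn_fact; rewrite prime_gt0 // addnn.
  rewrite -e Euclid_dvdM // Euclid_dvdM // (negPf (ndvd_fact h2)) /=.
  by rewrite orbF.
rewrite -(divnK hd) natrM mulfK ?p_neq0 //; exact: (pint_nat pp).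
Qed.

End P.

Lemma A_div p (a : rat) : prime p -> odd p -> pint p a ->
  ~~ congr_mod p 1 a 0 -> ~~ congr_mod p 1 a (-1) ->
  pint p (Aseq a p.-1 / (p ^ 3)%:R).
Proof.
move=> pp op ha h0 h1.
have p0 := p_neq0 pp.
have [i [ip ht]] := pint_res pp ha.
have i0 : i != 0%N.
  apply: contra h0 => /eqP ei; rewrite /congr_mod expn1 subr0.
  by move: ht; rewrite ei subr0.
have p3 : (3 <= p)%N.
  have := prime_gt1 pp; move: op; clear; case: p => [|[|[|q]]] //.
have ip1 : i != p.-1.
  apply: contra h1 => /eqP ei; rewrite /congr_mod expn1.
  have -> : (a - -1) / p%:R = (a - i%:R) / p%:R + 1.
    rewrite ei -subn1 natrB ?prime_gt0 //. by field.
  by apply: (pintD pp) => //; apply: (pint1 pp).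
set n := p.-1.
have hn : (n < p)%N by rewrite /n prednK ?prime_gt0 // ltnSn.
have hin : (i < n)%N by rewrite /n; lia.
have hb1 := binq_div pp hin hn ha ht.
have hjn : (n - i < n)%N by lia.
have hb2 : pint p (binq (-1 - a) n / p%:R).
  apply: (binq_div pp hjn hn); first by apply: (pintB pp) => //; apply: (pint1 pp).
  have -> : (-1 - a - (n - i)%:R) / p%:R = - ((a - i%:R) / p%:R) - 1.
    rewrite natrB; last by lia.
    rewrite /n -subn1 natrB ?prime_gt0 //. by field.
  by apply: (pintB pp); [apply: (pintN pp)|apply: (pint1 pp)].
have hc : pint p (('C(n.*2, n))%:R / p%:R).
  by apply: (Cdiv pp) => //; rewrite /n; lia.
have := pintM pp (pintM pp hb1 hb2) hc.
congr pint; rewrite /Aseq natrX; by field.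
Qed.

Unset Implicit Arguments.
Theorem theorem5p1 (p : nat) (a m : rat) :
  prime p -> odd p ->
  pint p a -> pint p m ->
  ~~ congr_mod p 1 m 0 -> ~~ congr_mod p 1 a 0 -> ~~ congr_mod p 1 a (-1) ->
  congr_mod p 3
    (\sum_(0 <= k < p) Aseq a k / (m ^+ k * (2 * k%:R - 1)))
    ((8 / m - 2) * (\sum_(0 <= k < p) k%:R * Aseq a k / m ^+ k)
     - (\sum_(0 <= k < p) Aseq a k / m ^+ k)
     - 8 * a * (a + 1) / m * (\sum_(0 <= k < p.-1) Aseq a k / (m ^+ k * (k%:R + 1)))).
Proof.
move=> pp op ha hm hm0 h0 h1.
have hA := A_div pp op ha h0 h1.
have hm' : ~~ pint p (m / p%:R) by move: hm0; rewrite /congr_mod expn1 subr0.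
have m0 : m != 0 by apply: contra hm' => /eqP ->; rewrite mul0r; apply: (pint0 pp).
have hmi := pintV pp hm hm'.
have E := ident a p.-1 m0; rewrite prednK ?prime_gt0 // in E.
rewrite /congr_mod E.
have p3 : ((p ^ 3)%:R : rat) != 0 by rewrite pnatr_eq0 expn_eq0 andbT -lt0n prime_gt0.
have -> : - (8 * p.-1%:R / m) * (Aseq a p.-1 / m ^+ p.-1) / (p ^ 3)%:R
  = - (8 * p.-1%:R) * m^-1 * (m^-1) ^+ p.-1 * (Aseq a p.-1 / (p ^ 3)%:R).
  by rewrite exprVn; field; rewrite (p_neq0 pp) m0 expf_neq0.
apply: (pintM pp) => //; apply: (pintM pp); last by apply: (pintX pp).
apply: (pintM pp) => //; apply: (pintN pp); rewrite -natrM; exact: (pint_nat pp).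
Qed.
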